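(* In the parallel-links routing game with homogeneous costs described in the context, for every $l$ with $1\le l<L$: (i) $T_l(f^*_l)\le T_{l+1}(f^*_{l+1})$; (ii) $T_l(\hat f_l)\le T_{l+1}(\hat f_{l+1})$.
   Context: Parallel-links routing game: users $\mathcal N=\{1,\dots,N\}$ share parallel links $\mathcal L=\{1,\dots,L\}$ from a common source to a common destination; link $l$ has capacity $c_l$, links indexed so that $c_1\ge c_2\ge\dots\ge c_L$. User $i$ has demand $r^i>0$, $R=\sum_ir^i<\sum_lc_l$. A routing strategy of user $i$ is $\mathbf f^i=(f^i_l)_l$ with $f^i_l\ge0$, $\sum_lf^i_l=r^i$; feasible profiles form $\mathbf F$; $f_l=\sum_if^i_l$. Homogeneous costs: $J^i(\mathbf f)=\sum_lf^i_lT_l(f_l)$, each $T_l:[0,\infty)\to[0,\infty)$ strictly increasing, convex, continuously differentiable, with $T_l(f_l)=T(c_l-f_l)$ for $f_l<c_l$ and $T_l(f_l)=\infty$ for $f_l\ge c_l$, for a single link-independent function $T$ with $T(c_l-f_l)$ strictly increasing in $f_l$. $(\hat f_l)_l$ are the link totals of the unique Nash equilibrium (feasible profile where each user's strategy minimizes its own cost given the others'). $(f^*_l)_l$ are the link totals minimizing the social cost $\sum_lf_lT_l(f_l)$ over feasible profiles. *)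

(* Defs.v *)
From mathcomp Require Import all_boot all_order all_algebra.
From mathcomp Require Import all_classical all_reals all_analysis.
Import Order.TTheory GRing.Theory Num.Theory.
Import numFieldNormedType.Exports.
Set Implicit Arguments.
Unset Strict Implicit.
Unset Printing Implicit Defensive.
Local Open Scope ring_scope.
Local Open Scope classical_set_scope.

(* Links are indexed by natural numbers 0 .. L-1 (paper: 1 .. L),
   users by 'I_N.  A profile is f : 'I_N -> nat -> R, f i l = f^i_l. *)

Definition linkcost (R : realType) (T : R -> R) (c : nat -> R) (l : nat) (x : R)
  : \bar R := if x < c l then (T (c l - x))%:E else +oo%E.

Definition strategy (R : realType) (L : nat) (rr : R) (g : nat -> R) : Prop :=
  (forall l, (l < L)%N -> 0 <= g l) /\ \sum_(l < L) g l = rr.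

Definition feasible (R : realType) (N L : nat) (r : 'I_N -> R)
  (f : 'I_N -> nat -> R) : Prop := forall i, strategy L (r i) (f i).

Definition link_flow (R : realType) (N : nat) (f : 'I_N -> nat -> R) (l : nat) : R :=
  \sum_(i < N) f i l.

Definition user_cost (R : realType) (N L : nat) (T : R -> R) (c : nat -> R)
  (f : 'I_N -> nat -> R) (i : 'I_N) : \bar R :=
  (\sum_(l < L) ((f i l)%:E * linkcost T c l (link_flow f l)))%E.

Definition replace (R : realType) (N : nat) (f : 'I_N -> nat -> R) (i : 'I_N)
  (g : nat -> R) : 'I_N -> nat -> R := fun j => if j == i then g else f j.

Definition is_Nash (R : realType) (N L : nat) (T : R -> R) (c : nat -> R)
  (r : 'I_N -> R) (f : 'I_N -> nat -> R) : Prop :=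
  feasible L r f /\
  forall i g, strategy L (r i) g ->
    (user_cost L T c f i <= user_cost L T c (replace f i g) i)%E.

Definition social_cost (R : realType) (N L : nat) (T : R -> R) (c : nat -> R)
  (f : 'I_N -> nat -> R) : \bar R :=
  (\sum_(l < L) ((link_flow f l)%:E * linkcost T c l (link_flow f l)))%E.

Definition is_social_opt (R : realType) (N L : nat) (T : R -> R) (c : nat -> R)
  (r : 'I_N -> R) (f : 'I_N -> nat -> R) : Prop :=
  feasible L r f /\
  forall g, feasible L r g -> (social_cost L T c f <= social_cost L T c g)%E.

Definition homogeneous_costs (R : realType) (L : nat) (T : R -> R) (c : nat -> R)
  : Prop :=
  forall l, (l < L)%N ->
    (forall x, 0 <= x -> x < c l -> 0 <= T (c l - x)) /\
    (forall x y, 0 <= x -> x < y -> y < c l -> T (c l - x) < T (c l - y)) /\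
    (forall x y t, 0 <= x -> x < c l -> 0 <= y -> y < c l -> 0 <= t -> t <= 1 ->
       T (c l - (t * x + (1 - t) * y)) <= t * T (c l - x) + (1 - t) * T (c l - y)) /\
    (exists dT : R -> R,
       {within `[0, c l[%classic, continuous dT} /\
       {within `[0, c l[%classic, continuous (fun x => T (c l - x))} /\
       (forall x, 0 < x -> x < c l -> is_derive x 1 (fun y => T (c l - y)) (dT x))).

(* Main.v *)
Require Import Defs.
From mathcomp Require Import all_boot all_order all_algebra.
From mathcomp Require Import all_classical all_reals all_analysis.
From mathcomp Require Import ring lra.
Import Order.TTheory GRing.Theory Num.Theory.
Local Open Scope ring_scope.

Lemma pair_conv (R : realType) (C : R) (T : R -> R)
  (conv : forall x y t, 0 <= x -> x < C -> 0 <= y -> y < C -> 0 <= t -> t <= 1 ->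
       T (C - (t * x + (1 - t) * y)) <= t * T (C - x) + (1 - t) * T (C - y))
  p q s : 0 <= p -> p < q -> q < s -> s < C ->
  T (C - q) + T (C - (s + p - q)) <= T (C - p) + T (C - s).
Proof.
move=> p0 pq qs sC.
have sp : 0 < s - p by lra.
set t := (s - q) / (s - p).
have t0 : 0 <= t by apply: divr_ge0; lra.
have t1 : t <= 1 by rewrite ler_pdivrMr //; lra.
have h1 := conv p s t p0 (lt_trans pq (lt_trans qs sC)) (ltW (le_lt_trans p0 (lt_trans pq qs))) sC t0 t1.
have t0' : 0 <= 1 - t by lra.
have t1' : 1 - t <= 1 by lra.
have h2 := conv p s (1 - t) p0 (lt_trans pq (lt_trans qs sC)) (ltW (le_lt_trans p0 (lt_trans pq qs))) sC t0' t1'.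
have e1 : t * p + (1 - t) * s = q.
  rewrite /t; field; apply/eqP; lra.
have e2 : (1 - t) * p + (1 - (1 - t)) * s = s + p - q.
  rewrite /t; field; apply/eqP; lra.
rewrite e1 in h1; rewrite e2 in h2.
lra.
Qed.

Lemma core (R : realType) (C : R) (T : R -> R)
  (mono : forall x y, 0 <= x -> x < y -> y < C -> T (C - x) < T (C - y))
  (conv : forall x y t, 0 <= x -> x < C -> 0 <= y -> y < C -> 0 <= t -> t <= 1 ->
       T (C - (t * x + (1 - t) * y)) <= t * T (C - x) + (1 - t) * T (C - y))
  a b x y e : 0 <= y -> y < x -> 0 <= b -> 0 < e -> b + e < a - e -> a < C ->
  (x - e) * T (C - (a - e)) + (y + e) * T (C - (b + e)) < x * T (C - a) + y * T (C - b).
Proof.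
move=> y0 yx b0 e0 h aC.
have hp := @pair_conv R C T conv b (b+e) a b0 ltac:(lra) ltac:(lra) aC.
have E : a + b - (b + e) = a - e by ring.
rewrite E in hp.
have m1 := mono b (b + e) b0 ltac:(lra) ltac:(lra).
have m2 := mono (b + e) (a - e) ltac:(lra) h ltac:(lra).
nra.
Qed.
Arguments core {R C T} mono conv a b x y e.

Lemma sum_two (R : realType) (u v : nat -> R) (L l : nat) (hl : (l.+1 < L)%N)
  (H : forall k, k != l -> k != l.+1 -> u k = v k) :
  \sum_(k < L) u k - \sum_(k < L) v k = (u l - v l) + (u l.+1 - v l.+1).
Proof.
rewrite -sumrB (bigD1 (Ordinal (ltnW hl))) //= (bigD1 (Ordinal hl)) /=.
rewrite big1 ?addr0 //.
  move=> k /andP[k1 k2].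
  by rewrite H ?subrr.
by apply/eqP => /(congr1 val) /= /eqP; rewrite eqn_leq ltnn.
Qed.

Lemma term_real (R : realType) (T : R -> R) (c : nat -> R) k (x l : R) :
  (x = 0 \/ l < c k) -> (x%:E * linkcost T c k l = (x * T (c k - l))%:E)%E.
Proof.
case=> [->|h]; first by rewrite mul0e mul0r.
by rewrite /linkcost h.
Qed.

Lemma fin_sum (R : realType) (L : nat) (T : R -> R) (c : nat -> R) (X l : nat -> R) :
  (forall k, (k < L)%N -> X k = 0 \/ l k < c k) ->
  (\sum_(k < L) (X k)%:E * linkcost T c k (l k) = (\sum_(k < L) X k * T (c k - l k))%:E)%E.
Proof.
move=> H; rewrite -sumEFin; apply: eq_bigr => k _; apply: term_real; exact: H.
Qed.
Arguments fin_sum {R L T c X l}.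

Lemma term_ge0 (R : realType) (L : nat) (T : R -> R) (c : nat -> R) k (x l : R) :
  homogeneous_costs L T c -> (k < L)%N -> 0 <= x -> 0 <= l ->
  (0 <= x%:E * linkcost T c k l)%E.
Proof.
move=> hc kL x0 l0; apply: mule_ge0; first by rewrite lee_fin.
rewrite /linkcost; case: ifP => h //.
by rewrite lee_fin; apply: (hc k kL).1.
Qed.

Lemma good_of_fin (R : realType) (L : nat) (T : R -> R) (c : nat -> R) (X l : nat -> R) :
  homogeneous_costs L T c ->
  (forall k, (k < L)%N -> 0 <= X k) -> (forall k, (k < L)%N -> 0 <= l k) ->
  (\sum_(k < L) (X k)%:E * linkcost T c k (l k) < +oo)%E ->
  forall k, (k < L)%N -> X k = 0 \/ l k < c k.
Proof.
move=> hc X0 l0 hs k kL.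
case: (boolP (l k < c k)) => h; first by right.
left; apply/eqP; apply: contraTT hs => Xk.
have Xp : 0 < X k by rewrite lt0r Xk X0.
rewrite -leNgt (bigD1 (Ordinal kL)) //=.
have -> : ((X k)%:E * linkcost T c k (l k))%E = +oo%E.
  by rewrite /linkcost (negbTE h) gt0_muley ?lte_fin.
rewrite addye //.
apply/eqP => E.
have : (0 <= \sum_(i < L | i != Ordinal kL) (X i)%:E * linkcost T c i (l i))%E.
  apply: sume_ge0 => j _; exact: (@term_ge0 _ _ _ _ _ _ _ hc (ltn_ord j) (X0 _ (ltn_ord j)) (l0 _ (ltn_ord j))).
by rewrite E.
Qed.

Lemma lf_replace (R : realType) (N : nat) (f : 'I_N -> nat -> R) i g k :
  link_flow (replace f i g) k = link_flow f k - f i k + g k.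
Proof.
rewrite /link_flow (bigD1 i) //= [in RHS](bigD1 i) //= /replace eqxx.
rewrite (eq_bigr (fun j => f j k)); last by move=> j /negbTE ->.
ring.
Qed.
Arguments lf_replace {R N} f i g k.

Lemma replace_self (R : realType) (N : nat) (f : 'I_N -> nat -> R) i g :
  replace f i g i = g.
Proof. by rewrite /replace eqxx. Qed.
Arguments replace_self {R N} f i g.

Definition pp (R : realType) (x : R) : R := if 0 < x then x else 0.
Arguments pp {R}.

Lemma pp_ge0 (R : realType) (x : R) : 0 <= pp x.
Proof. by rewrite /pp; case: ifP => // /ltW. Qed.

Lemma pp_ge (R : realType) (x : R) : x <= pp x.
Proof. by rewrite /pp; case: ltP. Qed.

Definition wgt (R : realType) (D : nat -> R) (L : nat) (rho : R) (k : nat) : R :=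
  rho * pp (D k) / \sum_(j < L) pp (D j).
Arguments wgt {R}.

Lemma wgt_prop (R : realType) (D : nat -> R) (L : nat) (rho : R) :
  0 <= rho -> rho < \sum_(j < L) pp (D j) ->
  (forall k, 0 <= wgt D L rho k) /\ \sum_(k < L) wgt D L rho k = rho /\
  (forall k, wgt D L rho k = 0 \/ wgt D L rho k < D k).
Proof.
move=> r0 rS.
set S := \sum_(j < L) pp (D j) in rS *.
have S0 : 0 < S by apply: le_lt_trans rS.
split.
  move=> k; rewrite /wgt; apply: divr_ge0; last exact: ltW.
  by apply: mulr_ge0 => //; exact: pp_ge0.
split.
  rewrite /wgt -mulr_suml -mulr_sumr -/S; field; exact: lt0r_neq0.
move=> k; rewrite /wgt.
rewrite /pp; case: ifP => h.
  by right; rewrite ltr_pdivrMr // mulrC ltr_pM2l.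
by left; rewrite mulr0 mul0r.
Qed.
Arguments wgt_prop {R} D L {rho}.

Lemma sum_flow (R : realType) (N L : nat) (r : 'I_N -> R) f :
  feasible L r f -> \sum_(k < L) link_flow f k = \sum_(i < N) r i.
Proof.
move=> hf; rewrite /link_flow exchange_big /=; apply: eq_bigr => i _.
by case: (hf i).
Qed.
Arguments sum_flow {R N L r f}.

Lemma flow_ge0 (R : realType) (N L : nat) (r : 'I_N -> R) f k :
  feasible L r f -> (k < L)%N -> 0 <= link_flow f k.
Proof.
move=> hf kL; rewrite /link_flow; apply: sumr_ge0 => i _; exact: (hf i).1.
Qed.
Arguments flow_ge0 {R N L r f k}.

Lemma le_sum_one (R : realType) (N : nat) (r : 'I_N -> R) j :
  (forall i, 0 < r i) -> r j <= \sum_(i < N) r i.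
Proof.
move=> hr; rewrite (bigD1 j) //= lerDl; apply: sumr_ge0 => i _; exact: ltW.
Qed.
Arguments le_sum_one {R N r} j.

Lemma social_good (R : realType) (N L : nat) (c : nat -> R) (r : 'I_N -> R) (T : R -> R) :
  (forall i, 0 < r i) ->
  \sum_(i < N) r i < \sum_(l < L) c l ->
  homogeneous_costs L T c ->
  forall fs, is_social_opt L T c r fs ->
  forall k, (k < L)%N -> link_flow fs k = 0 \/ link_flow fs k < c k.
Proof.
move=> hr hsum hc fs [hf hopt].
set S := \sum_(j < L) pp (c j).
set R0 := \sum_(i < N) r i.
have R00 : 0 <= R0 by apply: sumr_ge0 => i _; exact: ltW.
have RS : R0 < S by apply: (lt_le_trans hsum); apply: ler_sum => j _; exact: pp_ge.
pose g0 := fun (j : 'I_N) (k : nat) => wgt c L (r j) k.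
have hg0 : feasible L r g0.
  move=> j; have [w1 [w2 _]] := wgt_prop c L (ltW (hr j)) (le_lt_trans (le_sum_one j hr) RS).
  by split => // k _; exact: w1.
have lfg : forall k, link_flow g0 k = wgt c L R0 k.
  by move=> k; rewrite /link_flow /g0 /wgt /R0 -!mulr_suml.
have [_ [_ w3]] := wgt_prop c L R00 RS.
have fin0 : (social_cost L T c g0 < +oo)%E.
  rewrite /social_cost (@fin_sum _ _ _ _ (link_flow g0) (link_flow g0)) ?ltry //.
  by move=> k _; rewrite lfg; exact: w3.
apply: (@good_of_fin _ _ _ _ (link_flow fs) (link_flow fs) hc).
- by move=> k kL; exact: flow_ge0 hf kL.
- by move=> k kL; exact: flow_ge0 hf kL.
exact: (le_lt_trans (hopt g0 hg0) fin0).
Qed.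
Arguments social_good {R N L c r T}.

Lemma nash_good (R : realType) (N L : nat) (c : nat -> R) (r : 'I_N -> R) (T : R -> R) :
  (forall i, 0 < r i) ->
  \sum_(i < N) r i < \sum_(l < L) c l ->
  homogeneous_costs L T c ->
  forall fn, is_Nash L T c r fn ->
  forall i k, (k < L)%N -> fn i k = 0 \/ link_flow fn k < c k.
Proof.
move=> hr hsum hc fn [hf hN] i.
pose D := fun k => c k - (link_flow fn k - fn i k).
set S := \sum_(j < L) pp (D j).
have sD : \sum_(k < L) D k = \sum_(k < L) c k - \sum_(i < N) r i + r i.
  rewrite /D sumrB sumrB (sum_flow hf); case: (hf i) => _ ->; ring.
have RS : r i < S.
  apply: (lt_le_trans (y := \sum_(k < L) D k)); first by rewrite sD; lra.
  by apply: ler_sum => j _; exact: pp_ge.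
have [w1 [w2 w3]] := wgt_prop D L (ltW (hr i)) RS.
pose h := wgt D L (r i).
have hs : strategy L (r i) h by split => // k _; exact: w1.
have fin0 : (user_cost L T c (replace fn i h) i < +oo)%E.
  rewrite /user_cost replace_self.
  under eq_bigr do rewrite lf_replace.
  rewrite (@fin_sum _ _ _ _ h (fun k => link_flow fn k - fn i k + h k)) ?ltry //.
  move=> k _; case: (w3 k) => e; [by left | right].
  by rewrite /h; move: e; rewrite /D; lra.
apply: (@good_of_fin _ _ _ _ (fn i) (link_flow fn) hc).
- by move=> k kL; exact: (hf i).1.
- by move=> k kL; exact: flow_ge0 hf kL.
exact: (le_lt_trans (hN i h hs) fin0).
Qed.
Arguments nash_good {R N L c r T}.

Lemma cmp (R : realType) (L : nat) (T : R -> R) (c : nat -> R) (X Y lX lY : nat -> R) l :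
  (l.+1 < L)%N ->
  (forall k, (k < L)%N -> X k = 0 \/ lX k < c k) ->
  (forall k, k != l -> k != l.+1 -> X k = Y k /\ lX k = lY k) ->
  lY l < c l -> lY l.+1 < c l.+1 ->
  Y l * T (c l - lY l) + Y l.+1 * T (c l.+1 - lY l.+1) <
    X l * T (c l - lX l) + X l.+1 * T (c l.+1 - lX l.+1) ->
  (\sum_(k < L) (Y k)%:E * linkcost T c k (lY k) <
     \sum_(k < L) (X k)%:E * linkcost T c k (lX k))%E.
Proof.
move=> hl gX eq hYl hYl1 hlt.
have gY : forall k, (k < L)%N -> Y k = 0 \/ lY k < c k.
  move=> k kL; case: (eqVneq k l) => [->|k1]; first by right.
  case: (eqVneq k l.+1) => [->|k2]; first by right.
  by have [<- <-] := eq k k1 k2; exact: gX.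
rewrite (fin_sum gX) (fin_sum gY) lte_fin -subr_gt0.
rewrite (@sum_two _ (fun k => X k * T (c k - lX k)) (fun k => Y k * T (c k - lY k)) L l hl) /=.
  lra.
by move=> k k1 k2; have [-> ->] := eq k k1 k2.
Qed.
Arguments cmp {R L T c X Y lX lY l}.

Lemma shift_step (R : realType) (N L : nat) (c : nat -> R) (r : 'I_N -> R) (T : R -> R) :
  (forall l, (l.+1 < L)%N -> c l.+1 <= c l) ->
  homogeneous_costs L T c ->
  forall f, feasible L r f -> forall i l, (l.+1 < L)%N ->
  f i l.+1 < f i l -> link_flow f l < c l -> link_flow f l.+1 < c l.+1 ->
  T (c l.+1 - link_flow f l.+1) < T (c l - link_flow f l) ->
  exists g, strategy L (r i) g /\
   ((forall k, (k < L)%N -> f i k = 0 \/ link_flow f k < c k) ->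
      (user_cost L T c (replace f i g) i < user_cost L T c f i)%E) /\
   ((forall k, (k < L)%N -> link_flow f k = 0 \/ link_flow f k < c k) ->
      (social_cost L T c (replace f i g) < social_cost L T c f)%E).
Proof.
move=> hord hc f hf i l hl hxy ha hb hT.
have lL : (l < L)%N by exact: ltnW.
have [_ [mono [conv _]]] := hc l lL.
have d0 : 0 <= c l - c l.+1 by have := hord l hl; lra.
have y0 : 0 <= f i l.+1 by exact: (hf i).1.
have b0 : 0 <= link_flow f l.+1 by exact: flow_ge0 hf hl.
have a0 : 0 <= link_flow f l by exact: flow_ge0 hf lL.
have eqT : forall z, T (c l.+1 - z) = T (c l - (z + (c l - c l.+1))).
  by move=> z; congr T; ring.
have hab : link_flow f l.+1 + (c l - c l.+1) < link_flow f l.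
  rewrite ltNge; apply/negP => h.
  move: h; rewrite le_eqVlt => /orP[/eqP h|h].
    by move: hT; rewrite eqT -h ltxx.
  have := mono _ _ a0 h ltac:(lra).
  by rewrite -eqT; lra.
pose q := (link_flow f l - link_flow f l.+1 - (c l - c l.+1)) / 4.
have q0 : 0 < q by rewrite /q divr_gt0 //; lra.
have qE : 4 * q = link_flow f l - link_flow f l.+1 - (c l - c l.+1) by rewrite /q; field.
have x0 : 0 < f i l by lra.
pose e := f i l * q / (f i l + q).
have xq0 : 0 < f i l + q by lra.
have e0 : 0 < e by rewrite /e divr_gt0 // mulr_gt0.
have ex : e <= f i l by rewrite /e ler_pdivrMr //; nra.
have eq' : e < q by rewrite /e ltr_pdivrMr //; nra.
pose g := fun k => if k == l then f i l - e else if k == l.+1 then f i l.+1 + e else f i k.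
have gl : g l = f i l - e by rewrite /g eqxx.
have gl1 : g l.+1 = f i l.+1 + e by rewrite /g (gtn_eqF (ltnSn l)) eqxx.
have gk : forall k, k != l -> k != l.+1 -> g k = f i k.
  by move=> k k1 k2; rewrite /g (negbTE k1) (negbTE k2).
have hs : strategy L (r i) g.
  split.
    move=> k kL; rewrite /g; case: ifP => _; first lra.
    case: ifP => _; first lra.
    exact: (hf i).1.
  have := @sum_two _ g (f i) L l hl gk.
  rewrite gl gl1; case: (hf i) => _ ->; lra.
have lfr : forall k, link_flow (replace f i g) k = link_flow f k - f i k + g k.
  by move=> k; exact: lf_replace.
have lfk : forall k, k != l -> k != l.+1 -> link_flow (replace f i g) k = link_flow f k.
  by move=> k k1 k2; rewrite lfr gk //; ring.
have lfl : link_flow (replace f i g) l = link_flow f l - e by rewrite lfr gl; ring.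
have lfl1 : link_flow (replace f i g) l.+1 = link_flow f l.+1 + e by rewrite lfr gl1; ring.
have Ccore := core mono conv (link_flow f l)
  (link_flow f l.+1 + (c l - c l.+1)).
exists g; split => //; split.
- move=> good; rewrite /user_cost replace_self.
  apply: (cmp hl good) => //.
  + by move=> k k1 k2; split; [rewrite gk | rewrite lfk].
  + by rewrite lfl; lra.
  + by rewrite lfl1; lra.
  rewrite gl gl1 lfl lfl1 !eqT.
  have -> : link_flow f l.+1 + e + (c l - c l.+1) = link_flow f l.+1 + (c l - c l.+1) + e by ring.
  apply: Ccore => //; lra.
- move=> good; rewrite /social_cost.
  apply: (cmp hl good) => //.
  + by move=> k k1 k2; rewrite lfk.
  + by rewrite lfl; lra.
  + by rewrite lfl1; lra.
  rewrite lfl lfl1 !eqT.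
  have -> : link_flow f l.+1 + e + (c l - c l.+1) = link_flow f l.+1 + (c l - c l.+1) + e by ring.
  apply: Ccore => //; lra.
Qed.
Arguments shift_step {R N L c r T}.

Lemma flow_gt (R : realType) (L : nat) (c : nat -> R) (T : R -> R) l a b :
  (forall l, (l.+1 < L)%N -> c l.+1 <= c l) ->
  homogeneous_costs L T c -> (l.+1 < L)%N -> 0 <= a -> 0 <= b -> b < c l.+1 ->
  T (c l.+1 - b) < T (c l - a) -> b < a.
Proof.
move=> hord hc hl a0 b0 hb hT.
have [_ [mono _]] := hc l (ltnW hl).
have d0 : 0 <= c l - c l.+1 by have := hord l hl; lra.
have eqT : T (c l.+1 - b) = T (c l - (b + (c l - c l.+1))) by congr T; ring.
suff : b + (c l - c l.+1) < a by lra.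
rewrite ltNge; apply/negP; rewrite le_eqVlt => /orP[/eqP h|h].
  by move: hT; rewrite eqT -h ltxx.
have := mono _ _ a0 h ltac:(lra).
by rewrite -eqT; lra.
Qed.
Arguments flow_gt {R L c T l a b}.

Lemma feasible_replace (R : realType) (N L : nat) (r : 'I_N -> R) f i g :
  feasible L r f -> strategy L (r i) g -> feasible L r (replace f i g).
Proof. by move=> hf hs j; rewrite /replace; case: eqP => [->|]. Qed.
Arguments feasible_replace {R N L r f i g}.

Lemma exists_user (R : realType) (N : nat) (f : 'I_N -> nat -> R) l :
  link_flow f l.+1 < link_flow f l -> exists i, f i l.+1 < f i l.
Proof.
move=> h; case: (boolP [exists i, f i l.+1 < f i l]) => [/existsP //|/existsPn H].
exfalso; move: h; apply/negP; rewrite -leNgt; apply: ler_sum => i _.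
by rewrite leNgt; exact: H.
Qed.
Arguments exists_user {R N f l}.

Theorem lemma2p2 (R : realType) (N L : nat) (c : nat -> R) (r : 'I_N -> R)
  (T : R -> R) :
  (forall l, (l.+1 < L)%N -> c l.+1 <= c l) ->
  (forall i, 0 < r i) ->
  \sum_(i < N) r i < \sum_(l < L) c l ->
  homogeneous_costs L T c ->
  (forall fs, is_social_opt L T c r fs ->
     forall l, (l.+1 < L)%N ->
       (linkcost T c l (link_flow fs l) <= linkcost T c l.+1 (link_flow fs l.+1))%E) /\
  (forall fn, is_Nash L T c r fn ->
     forall l, (l.+1 < L)%N ->
       (linkcost T c l (link_flow fn l) <= linkcost T c l.+1 (link_flow fn l.+1))%E).
Proof.
move=> hord hr hsum hc; split.
- move=> fs hopt l hl.
  have hf := hopt.1.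
  have good := social_good hr hsum hc fs hopt.
  have lL : (l < L)%N by exact: ltnW.
  have a0 : 0 <= link_flow fs l by exact: flow_ge0 hf lL.
  have b0 : 0 <= link_flow fs l.+1 by exact: flow_ge0 hf hl.
  case: (boolP (link_flow fs l.+1 < c l.+1)) => hb; last by rewrite [X in (_ <= X)%E]/linkcost (negbTE hb) leey.
  rewrite [X in (_ <= X)%E]/linkcost hb.
  case: (boolP (link_flow fs l < c l)) => ha; last first.
    exfalso; have := hord l hl; case: (good l lL) => h; last by rewrite h in ha.
    by move: ha; rewrite -leNgt h; lra.
  rewrite /linkcost ha lee_fin leNgt; apply/negP => hT.
  have hab := flow_gt hord hc hl a0 b0 hb hT.
  have [i hi] := exists_user hab.
  have [g [hs [_ hsoc]]] := shift_step hord hc _ hf i l hl hi ha hb hT.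
  have := hopt.2 _ (feasible_replace hf hs).
  by rewrite leNgt (hsoc good).
- move=> fn hN l hl.
  have hf := hN.1.
  have good := nash_good hr hsum hc fn hN.
  have lL : (l < L)%N by exact: ltnW.
  have a0 : 0 <= link_flow fn l by exact: flow_ge0 hf lL.
  have b0 : 0 <= link_flow fn l.+1 by exact: flow_ge0 hf hl.
  case: (boolP (link_flow fn l.+1 < c l.+1)) => hb; last by rewrite [X in (_ <= X)%E]/linkcost (negbTE hb) leey.
  rewrite [X in (_ <= X)%E]/linkcost hb.
  case: (boolP (link_flow fn l < c l)) => ha; last first.
    exfalso; have := hord l hl.
    have a00 : link_flow fn l = 0.
      rewrite /link_flow big1 // => i _.
      by case: (good i l lL) => // h; rewrite h in ha.
    by move: ha; rewrite -leNgt a00; lra.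
  rewrite /linkcost ha lee_fin leNgt; apply/negP => hT.
  have hab := flow_gt hord hc hl a0 b0 hb hT.
  have [i hi] := exists_user hab.
  have [g [hs [husr _]]] := shift_step hord hc _ hf i l hl hi ha hb hT.
  have := hN.2 i g hs.
  by rewrite leNgt (husr (good i)).
Qed.
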